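(* Let $\Lambda$ be a countable index set, $\overline{a},\overline{r}$ sequences of positive reals indexed by $\Lambda$, let $0<t<p\le 2$ and $x\in\mathbb{R}^\Lambda$. Then $x\in k_t$ if and only if \[\gamma(x):=\sup_{\alpha>0}\alpha^{\frac{t-p}{p}}\|x-T_\alpha(x)\|_{\overline{\omega}_p,p}<\infty.\] More precisely, \[\gamma(x)\le 2\left(2^{p-t}-1\right)^{-1/p}\|x\|_{k_t}^{t/p}\quad\text{and}\quad \|x\|_{k_t}\le 2^{p/t}(2^t-1)^{-1/t}\gamma(x)^{p/t}.\]
   Context: For a sequence $\omega$ of positive reals and $p\in(0,\infty)$, $\|x\|_{\omega,p}=\left(\sum_{j\in\Lambda}\omega_j^p|x_j|^p\right)^{1/p}$ (possibly $+\infty$) and $\ell^p_\omega=\{x:\|x\|_{\omega,p}<\infty\}$. For $s\in(0,2]$, $(\overline{\omega}_s)_j=(\overline{a}_j^{2s-2}\overline{r}_j^{2-s})^{1/s}$. For $t\in(0,2)$, $k_t=\{x\in\mathbb{R}^\Lambda:\|x\|_{k_t}<\infty\}$ where $\|x\|_{k_t}=\sup_{\alpha>0}\alpha\left(\sum_{j\in\Lambda}\overline{a}_j^{-2}\overline{r}_j^2\mathbf{1}_{\{\overline{a}_j^{-2}\overline{r}_j\alpha<|x_j|\}}\right)^{1/t}$. For $\alpha>0$ the thresholding map $T_\alpha:\mathbb{R}^\Lambda\to\mathbb{R}^\Lambda$ is $T_\alpha(x)_j=x_j$ if $\overline{a}_j^{-2}\overline{r}_j\alpha<|x_j|$ and $T_\alpha(x)_j=0$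 otherwise. *)

(* Defs.v *)
From HB Require Import structures.
From mathcomp Require Import all_boot all_order all_algebra.
From mathcomp Require Import all_classical all_reals all_analysis.
Set Implicit Arguments. Unset Strict Implicit. Unset Printing Implicit Defensive.
Import Order.TTheory GRing.Theory Num.Theory.
Local Open Scope classical_set_scope.
Local Open Scope ring_scope.

Definition wnorm (I : countType) (R : realType) (omega : I -> R) (p : R)
  (x : I -> R) : \bar R :=
  ((\esum_(j in [set: I]) ((omega j `^ p) * (`|x j| `^ p))%:E) `^ p^-1)%E.

Definition omega_bar (I : countType) (R : realType) (a r : I -> R) (s : R)
  : I -> R :=
  fun j => (a j `^ (2 * s - 2) * r j `^ (2 - s)) `^ s^-1.

Definition above (I : countType) (R : realType) (a r : I -> R) (alpha : R)
  (x : I -> R) (j : I) : bool :=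
  (a j)^-2 * r j * alpha < `|x j|.

Definition kt_norm (I : countType) (R : realType) (a r : I -> R) (t : R)
  (x : I -> R) : \bar R :=
  ereal_sup [set (alpha%:E *
     ((\esum_(j in [set j | above a r alpha x j]) ((a j)^-2 * r j ^+ 2)%:E)
        `^ t^-1))%E | alpha in [set alpha : R | 0 < alpha]].

Definition kt (I : countType) (R : realType) (a r : I -> R) (t : R)
  : set (I -> R) := [set x | (kt_norm a r t x < +oo)%E].

Definition thresh (I : countType) (R : realType) (a r : I -> R) (alpha : R)
  (x : I -> R) : I -> R :=
  fun j => if above a r alpha x j then x j else 0.

Definition gamma_fun (I : countType) (R : realType) (a r : I -> R) (t p : R)
  (x : I -> R) : \bar R :=
  ereal_sup [set ((alpha `^ ((t - p) / p))%:E *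
     wnorm (omega_bar a r p) p (fun j => (x j - thresh a r alpha x j)%R))%E
   | alpha in [set alpha : R | 0 < alpha]].

(* Main.v *)
Require Import Defs.
From HB Require Import structures.
From mathcomp Require Import all_boot all_order all_algebra.
From mathcomp Require Import all_classical all_reals all_analysis.
From mathcomp Require Import ring lra.
Import Order.TTheory GRing.Theory Num.Theory.
Local Open Scope classical_set_scope.
Local Open Scope ring_scope.


Section Aux.
Variable R : realType.
Implicit Types x y z r : R.

Lemma powR_gt1 x r : 1 < x -> 0 < r -> 1 < x `^ r.
Proof.
move=> x1 r0; rewrite /powR gt_eqF ?(lt_trans ltr01)// expR_gt1.
by rewrite mulr_gt0// ln_gt0.
Qed.

Lemma powRV x r : 0 <= x -> (x^-1) `^ r = (x `^ r)^-1.
Proof.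
move=> x0; rewrite -powR_inv1// -powRrM mulN1r powRN //.
Qed.

Lemma powRXn x r n : 0 <= x -> (x ^+ n) `^ r = (x `^ r) ^+ n.
Proof.
move=> x0; by rewrite -powR_mulrn// powRAC (powR_mulrn _ (powR_ge0 _ _)).
Qed.

Lemma geo_le (c q : R) N : 0 <= c -> 0 <= q < 1 ->
  \sum_(n < N) c * q ^+ n <= c / (1 - q).
Proof.
move=> c0 /andP[q0 q1].
have hq : 0 < 1 - q by rewrite subr_gt0.
have E : \sum_(n < N) c * q ^+ n = c * (1 - q ^+ N) / (1 - q).
  elim: N => [|N IH]; first by rewrite big_ord0 expr0 subrr mulr0 mul0r.
  rewrite big_ord_recr /= IH exprS; field; by rewrite gt_eqF.
rewrite E ler_pM2r ?invr_gt0//.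
rewrite -[leRHS]mulr1 ler_wpM2l// lerBlDr lerDl exprn_ge0//.
Qed.

Lemma exN (u : R) (v : R) : 0 < u -> exists N : nat, v < u * 2 ^+ N.
Proof.
move=> u0.
have hb : 0 <= `|v| / u by rewrite divr_ge0// ltW.
have := archi_boundP hb; set n := Num.Def.archi_bound _ => hn.
exists n.
rewrite (le_lt_trans (ler_norm v))// -ltr_pdivrMl// (lt_trans _ (_ : n%:R < 2 ^+ n)) //.
  by rewrite mulrC.
by rewrite -natrX ltr_nat ltn_expl.
Qed.

Lemma exN_seq (T : eqType) (L : seq T) (P : nat -> T -> Prop) :
  (forall N M i, (N <= M)%N -> P N i -> P M i) ->
  (forall i, i \in L -> exists N, P N i) -> exists N, forall i, i \in L -> P N i.
Proof.
move=> mono; elim: L => [|x L IH] h; first by exists 0%N.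
have [N1 H1] := h x (mem_head _ _).
have [N2 H2] : exists N, forall i, i \in L -> P N i.
  by apply: IH => i iL; apply: h; rewrite inE iL orbT.
exists (maxn N1 N2) => i; rewrite inE => /orP[/eqP->|iL].
  by apply: mono H1; rewrite leq_maxl.
by apply: mono (H2 _ iL); rewrite leq_maxr.
Qed.

Lemma term_le_sum (F : nat -> R) N n0 : (forall n, 0 <= F n) -> (n0 < N)%N ->
  F n0 <= \sum_(n < N) F n.
Proof.
move=> F0 hn0; rewrite (bigD1 (Ordinal hn0))//=.
by rewrite lerDl sumr_ge0.
Qed.

Lemma ptA (al m y p : R) N : 0 < al -> 0 <= m -> 0 <= y -> 0 < p ->
  (0 < y -> al < y * 2 ^+ N) ->
  (if al < y then 0 else m * y `^ p) <=
  \sum_(n < N) (al / 2 ^+ n) `^ p * (if al / 2 ^+ n.+1 < y then m else 0).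
Proof.
move=> al0 m0 y0 p0 hN.
case: ifP => [_|hay].
  by apply: sumr_ge0 => n _; rewrite mulr_ge0 ?powR_ge0//; case: ifP.
move/negbT: hay; rewrite -leNgt => hya.
have [->|yp] := eqVneq y 0.
  by rewrite powR0 ?gt_eqF// mulr0; apply: sumr_ge0 => n _; rewrite mulr_ge0 ?powR_ge0//; case: ifP.
have y0' : 0 < y by rewrite lt_def yp.
have {}hN := hN y0'.
case: N hN => [|M] hN.
  by move: hN; rewrite expr0 mulr1 => /(lt_le_trans)/(_ hya); rewrite ltxx.
pose Q := fun n => al < y * 2 ^+ n.+1.
have exQ : exists n, Q n by exists M.
case: (ex_minnP exQ) => n0 Qn0 minn0.
have hn0 : (n0 < M.+1)%N by rewrite ltnS minn0.
have yle : y <= al / 2 ^+ n0.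
  case: n0 Qn0 minn0 hn0 => [|n'] Qn0 minn0 hn0.
    by rewrite expr0 divr1.
  rewrite ler_pdivlMr ?exprn_gt0//.
  case: (leP (y * 2 ^+ n'.+1) al) => // hlt.
  by have := minn0 n' hlt; rewrite ltnn.
apply: le_trans (@term_le_sum (fun n => (al / 2 ^+ n) `^ p * (if al / 2 ^+ n.+1 < y then m else 0)) M.+1 n0 _ hn0).
  rewrite ifT; last by rewrite ltr_pdivrMr ?exprn_gt0.
  rewrite mulrC ler_wpM2r//; apply: (ge0_ler_powR (ltW p0)) yle; rewrite nnegrE ?divr_ge0 ?exprn_ge0 ?(ltW al0)//.
move=> n; rewrite mulr_ge0 ?powR_ge0//; case: ifP => //.
Qed.

Lemma ptB (al m y p : R) N : 0 < al -> 0 <= m -> 0 <= y -> 0 < p ->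
  y <= al * 2 ^+ N ->
  (if al < y then m else 0) <=
  \sum_(n < N) ((al * 2 ^+ n) `^ p)^-1 * (if al * 2 ^+ n.+1 < y then 0 else m * y `^ p).
Proof.
move=> al0 m0 y0 p0 hN.
have t0 : forall n, 0 <= ((al * 2 ^+ n) `^ p)^-1 * (if al * 2 ^+ n.+1 < y then 0 else m * y `^ p).
  by move=> n; rewrite mulr_ge0 ?invr_ge0 ?powR_ge0//; case: ifP => // _; rewrite mulr_ge0 ?powR_ge0.
case: ifP => [hay|_]; last by rewrite sumr_ge0.
case: N hN => [|M] hN.
  by move: hN; rewrite expr0 mulr1 => /(lt_le_trans hay); rewrite ltxx.
pose Q := fun n => y <= al * 2 ^+ n.+1.
have exQ : exists n, Q n by exists M.
case: (ex_minnP exQ) => n0 Qn0 minn0.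
have hn0 : (n0 < M.+1)%N by rewrite ltnS minn0.
have ylt : al * 2 ^+ n0 < y.
  case: n0 Qn0 minn0 hn0 => [|n'] Qn0 minn0 hn0.
    by rewrite expr0 mulr1.
  case: (ltP (al * 2 ^+ n'.+1) y) => // hle.
  by have := minn0 n' hle; rewrite ltnn.
apply: le_trans (@term_le_sum (fun n => ((al * 2 ^+ n) `^ p)^-1 * (if al * 2 ^+ n.+1 < y then 0 else m * y `^ p)) M.+1 n0 t0 hn0).
rewrite /= ifF; last by apply/negbTE; rewrite -leNgt.
have X0 : 0 < (al * 2 ^+ n0) `^ p by rewrite powR_gt0// mulr_gt0// exprn_gt0.
rewrite ler_pdivlMl// mulrC ler_wpM2l//; apply: (ge0_ler_powR (ltW p0)) (ltW ylt); rewrite nnegrE ?mulr_ge0 ?exprn_ge0 ?(ltW al0)//.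
Qed.

Lemma two_lt (t p : R) : t < p -> 2 `^ t < 2 `^ p.
Proof.
move=> tp.
have -> : p = t + (p - t) by rewrite addrC subrK.
rewrite powRD; last by apply/implyP => _; rewrite pnatr_eq0.
rewrite ltr_pMr ?powR_gt0// powR_gt1 ?subr_gt0//; lra.
Qed.

Lemma idA (al k t p : R) n : 0 < al -> 0 <= k ->
  (al / 2 ^+ n) `^ p * (k / (al / 2 ^+ n.+1)) `^ t =
  (al `^ p * k `^ t * 2 `^ t / al `^ t) * (2 `^ t / 2 `^ p) ^+ n.
Proof.
move=> al0 k0.
have h2 : (0:R) <= 2 by [].
rewrite powRM ?invr_ge0 ?exprn_ge0 ?(ltW al0)// powRV ?exprn_ge0// powRXn//.
rewrite invf_div powRM ?mulr_ge0 ?invr_ge0 ?exprn_ge0 ?(ltW al0)//.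
rewrite powRM ?invr_ge0 ?exprn_ge0 ?(ltW al0)// powRV ?(ltW al0)// powRXn//.
have P0 : 2 `^ p != 0 by rewrite gt_eqF ?powR_gt0.
have T0 : 2 `^ t != 0 by rewrite gt_eqF ?powR_gt0.
have A0 : al `^ t != 0 by rewrite gt_eqF ?powR_gt0.
rewrite exprS expr_div_n.
have Pn : (2 `^ p) ^+ n != 0 by rewrite expf_neq0.
field.
by rewrite Pn A0.
Qed.

Lemma idB (al g t p : R) n : 0 < al -> 0 <= g -> 0 < p ->
  ((al * 2 ^+ n) `^ p)^-1 * (g / (al * 2 ^+ n.+1) `^ ((t - p) / p)) `^ p =
  (g `^ p * 2 `^ p / (2 `^ t * al `^ t)) * ((2 `^ t)^-1) ^+ n.
Proof.
move=> al0 g0 p0.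
have h2 : (0:R) <= 2 by [].
have a0 := ltW al0.
rewrite powRM ?exprn_ge0// powRXn//.
rewrite powRM ?invr_ge0 ?powR_ge0// powRV ?powR_ge0// -powRrM.
have -> : (t - p) / p * p = t - p by rewrite mulfVK ?gt_eqF.
rewrite powRM ?exprn_ge0// powRXn//.
rewrite powRB; last by apply/implyP => _; rewrite gt_eqF.
rewrite powRB; last by apply/implyP => _; rewrite pnatr_eq0.
have P0 : 2 `^ p != 0 by rewrite gt_eqF ?powR_gt0.
have T0 : 2 `^ t != 0 by rewrite gt_eqF ?powR_gt0.
have A0 : al `^ t != 0 by rewrite gt_eqF ?powR_gt0.
have Ap0 : al `^ p != 0 by rewrite gt_eqF ?powR_gt0.
rewrite exprS !expr_div_n exprVn.
have Pn : (2 `^ p) ^+ n != 0 by rewrite expf_neq0.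
have Tn : (2 `^ t) ^+ n != 0 by rewrite expf_neq0.
field.
by rewrite Tn A0 T0 Pn P0 Ap0.
Qed.

Lemma shellA (T : eqType) (L : seq T) (mu y : T -> R) (k t p al : R) :
  0 < t -> t < p -> 0 <= k -> 0 < al ->
  (forall i, 0 <= mu i) -> (forall i, 0 <= y i) ->
  (forall s, 0 < s -> \sum_(i <- L) (if s < y i then mu i else 0) <= (k / s) `^ t) ->
  \sum_(i <- L) (if al < y i then 0 else mu i * y i `^ p) <=
  (al `^ p * k `^ t * 2 `^ t / al `^ t) / (1 - 2 `^ t / 2 `^ p).
Proof.
move=> t0 tp k0 al0 mu0 y0 H.
have p0 : 0 < p by apply: lt_trans tp.
have [N HN] : exists N, forall i, i \in L -> (0 < y i -> al < y i * 2 ^+ N).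
  apply: exN_seq.
    move=> N M i NM h yi; apply: (lt_le_trans (h yi)).
    by rewrite ler_wpM2l ?y0// ler_eXn2l// ltr1n.
  move=> i _; have [yi|yi] := ltP 0 (y i).
    by have [N hN] := exN (y i) al yi; exists N.
  by exists 0%N.
apply: (le_trans (y := \sum_(i <- L) \sum_(n < N) (al / 2 ^+ n) `^ p *
   (if al / 2 ^+ n.+1 < y i then mu i else 0))).
  rewrite big_seq_cond [leRHS]big_seq_cond; apply: ler_sum => i /andP[iL _].
  exact: ptA (HN i iL).
rewrite exchange_big /=.
apply: (le_trans (y := \sum_(n < N) (al / 2 ^+ n) `^ p * (k / (al / 2 ^+ n.+1)) `^ t)).
  apply: ler_sum => n _; rewrite -mulr_sumr ler_wpM2l ?powR_ge0// H//.
  by rewrite divr_gt0// exprn_gt0.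
under eq_bigr do rewrite idA//.
apply: geo_le.
  by rewrite divr_ge0 ?powR_ge0// !mulr_ge0 ?powR_ge0.
by rewrite divr_ge0 ?powR_ge0//= ltr_pdivrMr ?powR_gt0// mul1r two_lt.
Qed.

Lemma shellB (T : eqType) (L : seq T) (mu y : T -> R) (g t p al : R) :
  0 < t -> t < p -> 0 <= g -> 0 < al ->
  (forall i, 0 <= mu i) -> (forall i, 0 <= y i) ->
  (forall s, 0 < s -> \sum_(i <- L) (if s < y i then 0 else mu i * y i `^ p)
      <= (g / s `^ ((t - p) / p)) `^ p) ->
  \sum_(i <- L) (if al < y i then mu i else 0) <=
  (g `^ p * 2 `^ p / (2 `^ t * al `^ t)) / (1 - (2 `^ t)^-1).
Proof.
move=> t0 tp g0 al0 mu0 y0 H.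
have p0 : 0 < p by apply: lt_trans tp.
have [N HN] : exists N, forall i, i \in L -> y i <= al * 2 ^+ N.
  apply: exN_seq.
    move=> N M i NM h; apply: (le_trans h).
    by rewrite ler_wpM2l ?(ltW al0)// ler_eXn2l// ltr1n.
  move=> i _; have [N hN] := @exN al (y i) al0; exists N; exact: ltW.
apply: (le_trans (y := \sum_(i <- L) \sum_(n < N) ((al * 2 ^+ n) `^ p)^-1 *
   (if al * 2 ^+ n.+1 < y i then 0 else mu i * y i `^ p))).
  rewrite big_seq_cond [leRHS]big_seq_cond; apply: ler_sum => i /andP[iL _].
  exact: ptB (HN i iL).
rewrite exchange_big /=.
apply: (le_trans (y := \sum_(n < N) ((al * 2 ^+ n) `^ p)^-1 *
    (g / (al * 2 ^+ n.+1) `^ ((t - p) / p)) `^ p)).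
  apply: ler_sum => n _; rewrite -mulr_sumr ler_wpM2l ?invr_ge0 ?powR_ge0// H//.
  by rewrite mulr_gt0// exprn_gt0.
under eq_bigr do rewrite idB//.
apply: geo_le.
  by rewrite divr_ge0 ?powR_ge0 ?mulr_ge0 ?powR_ge0.
rewrite invr_ge0 powR_ge0 /= invf_lt1 ?powR_gt0// powR_gt1//; lra.
Qed.

Lemma powR_eqI (u v r : R) : 0 <= u -> 0 <= v -> 0 < r -> u `^ r = v `^ r -> u = v.
Proof.
move=> u0 v0 r0 h; exact: (powR_injective r0) h.
Qed.

Lemma finA (al k t p : R) : 0 < t -> t < p -> 0 <= k -> 0 < al ->
  al `^ ((t - p) / p) * ((al `^ p * k `^ t * 2 `^ t / al `^ t) / (1 - 2 `^ t / 2 `^ p)) `^ p^-1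
  = 2 * (2 `^ (p - t) - 1) `^ (- p^-1) * k `^ (t / p).
Proof.
move=> t0 tp k0 al0.
have p0 : 0 < p by apply: lt_trans tp.
have h2 : (0:R) <= 2 by [].
have TP := @two_lt t p tp.
have P0 : 0 < 2 `^ p by rewrite powR_gt0.
have T0 : 0 < 2 `^ t by rewrite powR_gt0.
have q1 : 0 < 1 - 2 `^ t / 2 `^ p by rewrite subr_gt0 ltr_pdivrMr// mul1r.
have q2 : 0 < 2 `^ (p - t) - 1.
  by rewrite subr_gt0 powR_gt1 ?subr_gt0//; lra.
have X0 : 0 <= al `^ p * k `^ t * 2 `^ t / al `^ t / (1 - 2 `^ t / 2 `^ p).
  by rewrite divr_ge0 ?(ltW q1)// divr_ge0 ?powR_ge0// !mulr_ge0 ?powR_ge0.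
have C0 : (0:R) <= 2 * (2 `^ (p - t) - 1) `^ (- p^-1) by rewrite mulr_ge0 ?powR_ge0.
apply: (@powR_eqI _ _ p).
- by rewrite mulr_ge0 ?powR_ge0.
- by rewrite mulr_ge0 ?powR_ge0.
- exact: p0.
rewrite (powRM _ (powR_ge0 _ _) (powR_ge0 _ _)).
rewrite (powRM _ C0 (powR_ge0 _ _)) (powRM _ h2 (powR_ge0 _ _)).
rewrite -!powRrM.
have -> : (t - p) / p * p = t - p by rewrite mulfVK ?gt_eqF.
have -> : p^-1 * p = 1 by rewrite mulVf ?gt_eqF.
have -> : - p^-1 * p = -1 by rewrite mulNr mulVf ?gt_eqF.
have -> : t / p * p = t by rewrite mulfVK ?gt_eqF.
rewrite (powRr1 X0).
rewrite powR_inv1 ?(ltW q2)//.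
rewrite powRB; last by apply/implyP => _; rewrite gt_eqF.
rewrite powRB; last by apply/implyP => _; rewrite pnatr_eq0.
have A0 : al `^ t != 0 by rewrite gt_eqF ?powR_gt0.
have Ap0 : al `^ p != 0 by rewrite gt_eqF ?powR_gt0.
have D0 : 2 `^ p - 2 `^ t != 0 by rewrite subr_eq0 gt_eqF.
have D1 : 2 `^ p / 2 `^ t - 1 != 0.
  by rewrite subr_eq0 gt_eqF// ltr_pdivlMr// mul1r.
field.
by rewrite mulN1r D0 A0 Ap0 !gt_eqF.
Qed.

Lemma finB (al g t p : R) : 0 < t -> t < p -> 0 <= g -> 0 < al ->
  al * ((g `^ p * 2 `^ p / (2 `^ t * al `^ t)) / (1 - (2 `^ t)^-1)) `^ t^-1
  = 2 `^ (p / t) * (2 `^ t - 1) `^ (- t^-1) * g `^ (p / t).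
Proof.
move=> t0 tp g0 al0.
have p0 : 0 < p by apply: lt_trans tp.
have h2 : (0:R) <= 2 by [].
have T1 : 1 < 2 `^ t by rewrite powR_gt1//; lra.
have T0 : 0 < 2 `^ t by rewrite powR_gt0.
have P0 : 0 < 2 `^ p by rewrite powR_gt0.
have q1 : 0 < 1 - (2 `^ t)^-1 by rewrite subr_gt0 invf_lt1.
have q2 : 0 < 2 `^ t - 1 by rewrite subr_gt0.
have X0 : 0 <= g `^ p * 2 `^ p / (2 `^ t * al `^ t) / (1 - (2 `^ t)^-1).
  by rewrite divr_ge0 ?(ltW q1)// divr_ge0 ?mulr_ge0 ?powR_ge0.
have C0 : (0:R) <= 2 `^ (p / t) * (2 `^ t - 1) `^ (- t^-1) by rewrite mulr_ge0 ?powR_ge0.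
apply: (@powR_eqI _ _ t).
- by rewrite mulr_ge0 ?powR_ge0 ?(ltW al0).
- by rewrite mulr_ge0 ?powR_ge0.
- exact: t0.
rewrite (powRM _ (ltW al0) (powR_ge0 _ _)).
rewrite (powRM _ C0 (powR_ge0 _ _)) (powRM _ (powR_ge0 _ _) (powR_ge0 _ _)).
rewrite -!powRrM.
have -> : t^-1 * t = 1 by rewrite mulVf ?gt_eqF.
have -> : - t^-1 * t = -1 by rewrite mulNr mulVf ?gt_eqF.
have -> : p / t * t = p by rewrite mulfVK ?gt_eqF.
rewrite (powRr1 X0).
rewrite powR_inv1 ?(ltW q2)//.
have A0 : al `^ t != 0 by rewrite gt_eqF ?powR_gt0.
have D0 : 2 `^ t - 1 != 0 by rewrite gt_eqF.
field.
by rewrite D0 A0 gt_eqF.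
Qed.
End Aux.


Section E.
Variables (R : realType) (I : choiceType).

Lemma esum_le (f : I -> R) (B : R) : (forall i, 0 <= f i) ->
  (forall L : seq I, uniq L -> \sum_(i <- L) f i <= B) ->
  (\esum_(i in [set: I]) (f i)%:E <= B%:E)%E.
Proof.
move=> f0 H; apply: ge_ereal_sup => _ [X [finX _] <-].
rewrite fsbig_finite// sumEFin lee_fin; apply: H; exact: finmap.fset_uniq.
Qed.

Lemma le_esum_seq (f : I -> R) (L : seq I) : uniq L ->
  ((\sum_(i <- L) f i)%:E <= \esum_(i in [set: I]) (f i)%:E)%E.
Proof.
move=> uL; apply: esum_ge; exists [set` L]; first by split => //; exact: finite_seq.
by rewrite -sumEFin fsbig_seq.
Qed.

Lemma genbound (c r k : R) (X : \bar R) : 0 < c -> 0 < r -> (0 <= X)%E ->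
  (c%:E * X `^ r^-1 <= k%:E)%E -> (X <= ((k / c) `^ r)%:E)%E.
Proof.
move=> c0 r0; case: X => [x| |] // x0.
- rewrite poweR_EFin -EFinM !lee_fin => h.
  have h1 : x `^ r^-1 <= k / c by rewrite ler_pdivlMr// mulrC.
  have kc : 0 <= k / c by apply: le_trans h1; exact: powR_ge0.
  have := ge0_ler_powR (ltW r0) _ _ h1.
  rewrite -powRrM mulVf ?gt_eqF// powRr1//; apply; rewrite nnegrE ?powR_ge0//.
- rewrite poweRyr ?invr_neq0 ?gt_eqF// gt0_muley ?lte_fin// leye_eq //.
Qed.

Definition Aset (mu y : I -> R) (b : R) : \bar R :=
  \esum_(j in [set: I]) (if b < y j then mu j else 0)%:E.
Definition Sset (mu y : I -> R) (p b : R) : \bar R :=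
  \esum_(j in [set: I]) (if b < y j then 0 else mu j * y j `^ p)%:E.
Definition Kf (mu y : I -> R) (t : R) : \bar R :=
  ereal_sup [set (al%:E * (Aset mu y al) `^ t^-1)%E | al in [set al : R | 0 < al]].
Definition Gf (mu y : I -> R) (t p : R) : \bar R :=
  ereal_sup [set ((al `^ ((t - p) / p))%:E * (Sset mu y p al) `^ p^-1)%E
     | al in [set al : R | 0 < al]].

Lemma Kf_ge0 mu y t : (0 <= Kf mu y t)%E.
Proof.
apply: le_trans (ereal_sup_ubound _); last by exists 1 => //=.
by rewrite mule_ge0 ?poweR_ge0.
Qed.

Lemma Gf_ge0 mu y t p : (0 <= Gf mu y t p)%E.
Proof.
apply: le_trans (ereal_sup_ubound _); last by exists 1 => //=.
by rewrite mule_ge0 ?poweR_ge0// lee_fin powR_ge0.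
Qed.

Lemma Aset_ge0 mu y b : (forall i, 0 <= mu i) -> (0 <= Aset mu y b)%E.
Proof. by move=> m0; apply: esum_ge0 => i _; rewrite lee_fin; case: ifP. Qed.

Lemma Sset_ge0 mu y p b : (forall i, 0 <= mu i) -> (0 <= Sset mu y p b)%E.
Proof.
by move=> m0; apply: esum_ge0 => i _; rewrite lee_fin; case: ifP => // _; rewrite mulr_ge0 ?powR_ge0.
Qed.


Lemma partA mu y t p : 0 < t -> t < p -> (forall i, 0 <= mu i) -> (forall i, 0 <= y i) ->
  (Gf mu y t p <= (2 * (2 `^ (p - t) - 1) `^ (- p^-1))%:E * Kf mu y t `^ (t / p))%E.
Proof.
move=> t0 tp m0 y0.
have p0 : 0 < p by apply: lt_trans tp.
have C0 : 0 < 2 * (2 `^ (p - t) - 1) `^ (- p^-1).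
  by rewrite mulr_gt0 ?powR_gt0// subr_gt0 powR_gt1 ?subr_gt0//; lra.
have := Kf_ge0 mu y t; case E: (Kf mu y t) => [k| |] // K0.
- rewrite lee_fin in K0.
  rewrite poweR_EFin -EFinM; apply: ge_ereal_sup => _ [al /= al0 <-].
  have HA : forall s, 0 < s -> (Aset mu y s <= ((k / s) `^ t)%:E)%E.
    move=> s s0; apply: genbound => //; first exact: Aset_ge0.
    by rewrite -E; apply: ereal_sup_ubound; exists s.
  have HS : (Sset mu y p al <= ((al `^ p * k `^ t * 2 `^ t / al `^ t) /
       (1 - 2 `^ t / 2 `^ p))%:E)%E.
    apply: esum_le.
      by move=> i; case: ifP => // _; rewrite mulr_ge0 ?powR_ge0.
    move=> L uL; apply: shellA => // s s0; rewrite -lee_fin.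
    apply: le_trans (HA s s0); rewrite /Aset; exact: le_esum_seq.
  apply: (le_trans (y := ((al `^ ((t - p) / p))%:E * (((al `^ p * k `^ t * 2 `^ t / al `^ t) /
       (1 - 2 `^ t / 2 `^ p)) `^ p^-1)%:E)%E)).
    apply: lee_pmul; rewrite ?lee_fin ?powR_ge0 ?poweR_ge0//.
    rewrite -poweR_EFin; apply: gt0_ler_poweR => //.
    + by rewrite invr_ge0 ltW.
    + by rewrite in_itv /= leey andbT Sset_ge0.
    + by rewrite in_itv /= leey andbT; exact: le_trans (Sset_ge0 _ _ _ _ m0) HS.
  by rewrite -EFinM lee_fin finA.
- by rewrite poweRyr ?mulf_neq0 ?gt_eqF ?invr_gt0// gt0_muley ?lte_fin// leey.
Qed.

Lemma partB mu y t p : 0 < t -> t < p -> (forall i, 0 <= mu i) -> (forall i, 0 <= y i) ->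
  (Kf mu y t <= (2 `^ (p / t) * (2 `^ t - 1) `^ (- t^-1))%:E * Gf mu y t p `^ (p / t))%E.
Proof.
move=> t0 tp m0 y0.
have p0 : 0 < p by apply: lt_trans tp.
have C0 : 0 < 2 `^ (p / t) * (2 `^ t - 1) `^ (- t^-1).
  by rewrite mulr_gt0 ?powR_gt0// subr_gt0 powR_gt1//; lra.
have := Gf_ge0 mu y t p; case E: (Gf mu y t p) => [g| |] // G0.
- rewrite lee_fin in G0.
  rewrite poweR_EFin -EFinM; apply: ge_ereal_sup => _ [al /= al0 <-].
  have HS : forall s, 0 < s -> (Sset mu y p s <= ((g / s `^ ((t - p) / p)) `^ p)%:E)%E.
    move=> s s0; apply: genbound => //; first exact: powR_gt0.
      exact: Sset_ge0.
    by rewrite -E; apply: ereal_sup_ubound; exists s.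
  have HA : (Aset mu y al <= ((g `^ p * 2 `^ p / (2 `^ t * al `^ t)) / (1 - (2 `^ t)^-1))%:E)%E.
    apply: esum_le.
      by move=> i; case: ifP.
    move=> L uL; apply: shellB => // s s0; rewrite -lee_fin.
    apply: le_trans (HS s s0); rewrite /Sset; exact: le_esum_seq.
  apply: (le_trans (y := (al%:E * (((g `^ p * 2 `^ p / (2 `^ t * al `^ t)) /
       (1 - (2 `^ t)^-1)) `^ t^-1)%:E)%E)).
    apply: lee_pmul; rewrite ?lee_fin ?(ltW al0) ?poweR_ge0//.
    rewrite -poweR_EFin; apply: gt0_ler_poweR => //.
    + by rewrite invr_ge0 ltW.
    + by rewrite in_itv /= leey andbT Aset_ge0.
    + by rewrite in_itv /= leey andbT; exact: le_trans (Aset_ge0 _ _ _ m0) HA.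
  by rewrite -EFinM lee_fin finB.
- by rewrite poweRyr ?mulf_neq0 ?gt_eqF ?invr_gt0// gt0_muley ?lte_fin// leey.
Qed.
End E.


Arguments Kf {R I}.
Arguments Gf {R I}.
Arguments Aset {R I}.
Arguments Sset {R I}.
Arguments partA {R I}.
Arguments partB {R I}.

Lemma omega_id (R : realType) (A Rr p u : R) : 0 < A -> 0 < Rr -> 0 < p -> 0 <= u ->
  (A `^ (2 * p - 2) * Rr `^ (2 - p)) `^ p^-1 `^ p * u `^ p =
  (A^-2 * Rr ^+ 2) * (u / (A^-2 * Rr)) `^ p.
Proof.
move=> A0 R0 p0 u0.
have h2 : (0:R) <= 2 by [].
rewrite -powRrM mulVf ?gt_eqF// powRr1 ?mulr_ge0 ?powR_ge0//.
rewrite powRM ?invr_ge0 ?mulr_ge0 ?invr_ge0 ?exprn_ge0 ?(ltW A0) ?(ltW R0)//.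
rewrite powRV ?mulr_ge0 ?invr_ge0 ?exprn_ge0 ?(ltW A0) ?(ltW R0)//.
rewrite powRM ?invr_ge0 ?exprn_ge0 ?(ltW A0) ?(ltW R0)//.
rewrite powRV ?exprn_ge0 ?(ltW A0)// powRXn ?(ltW A0)//.
rewrite powRB; last by apply/implyP => _; rewrite gt_eqF.
rewrite powRB; last by apply/implyP => _; rewrite gt_eqF.
rewrite (mulrC 2 p) powRrM (powR_mulrn _ (powR_ge0 _ _)) !(powR_mulrn _ (ltW A0)) !(powR_mulrn _ (ltW R0)).
have a1 : A != 0 by rewrite gt_eqF.
have a2 : A `^ p != 0 by rewrite gt_eqF ?powR_gt0.
have a3 : Rr `^ p != 0 by rewrite gt_eqF ?powR_gt0.
have a4 : Rr != 0 by rewrite gt_eqF.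
field.
by rewrite a1 a2 a3.
Qed.

Theorem lemma3p6 (I : countType) (R : realType) (a r : I -> R)
  (ha : forall j, 0 < a j) (hr : forall j, 0 < r j)
  (t p : R) (ht : 0 < t) (htp : t < p) (hp2 : p <= 2) (x : I -> R) :
  (kt a r t x <-> (gamma_fun a r t p x < +oo)%E) /\
  (gamma_fun a r t p x <=
     (2 * (2 `^ (p - t) - 1) `^ (- p^-1))%:E * kt_norm a r t x `^ (t / p))%E /\
  (kt_norm a r t x <=
     (2 `^ (p / t) * (2 `^ t - 1) `^ (- t^-1))%:E * gamma_fun a r t p x `^ (p / t))%E.
Proof.
have p0 : 0 < p by apply: lt_trans htp.
pose c j := (a j)^-2 * r j.
have c0 : forall j, 0 < c j by move=> j; rewrite mulr_gt0 ?invr_gt0 ?exprn_gt0.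
pose y j := `|x j| / c j.
pose mu j := (a j)^-2 * r j ^+ 2.
have y0 : forall j, 0 <= y j by move=> j; rewrite /y divr_ge0 ?(ltW (c0 j)).
have mu0 : forall j, 0 <= mu j.
  move=> j; rewrite /mu mulr_ge0 ?invr_ge0 ?exprn_ge0 ?(ltW (ha j)) ?(ltW (hr j))//.
have abE : forall al j, above a r al x j = (al < y j).
  by move=> al j; rewrite /above /y ltr_pdivlMr// mulrC.
have KE : kt_norm a r t x = Kf mu y t.
  rewrite /kt_norm /Kf; congr ereal_sup; apply: eq_imagel => al _.
  congr (_ * _ `^ _)%E; rewrite /Aset esum_mkcond; apply: eq_esum => j _.
  have -> : (j \in [set j0 | above a r al x j0]) = (al < y j).
    apply/idP/idP => h; first by move/set_mem: h => /=; rewrite abE.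
    by apply: mem_set; rewrite /= abE.
  by case: ifP.
have GE : gamma_fun a r t p x = Gf mu y t p.
  rewrite /gamma_fun /Gf /wnorm; congr ereal_sup; apply: eq_imagel => al _.
  congr (_ * _ `^ _)%E; rewrite /Sset; apply: eq_esum => j _; congr EFin.
  rewrite /thresh abE; case: ifP => _.
    by rewrite subrr normr0 powR0 ?gt_eqF// mulr0.
  by rewrite subr0 /omega_bar omega_id.
rewrite KE GE.
have hA := partA mu y t p ht htp mu0 y0.
have hB := partB mu y t p ht htp mu0 y0.
split; last by split.
rewrite /kt /= KE; split => h.
- apply: le_lt_trans hA _; apply: lte_mul_pinfty => //; first by rewrite lee_fin mulr_ge0 ?powR_ge0.
  exact: poweR_lty.
- apply: le_lt_trans hB _; apply: lte_mul_pinfty => //; first by rewrite lee_fin mulr_ge0 ?powR_ge0.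
  exact: poweR_lty.
Qed.
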